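(* Let $n\ge1$, let $C=(c_{i,j})$ be an $n\times n$ Bott matrix over $\mathbb{Z}_2$, $Y_n=Y(C)$ the associated real Bott tower and $\alpha_{n+1},\dots,\alpha_{2n}\in\pi_1(Y_n)$ as defined below. Then the commutator subgroup $[\pi_1(Y_n),\pi_1(Y_n)]$ is a free abelian group with generators $\alpha_q^2$, where $n+1\le q\le 2n$ ranges over those indices for which there exists $p<q$ with $c_{p-n,q-n}=1$.
   Context: A Bott matrix is an $n\times n$ matrix $C=(c_{i,j})$ with entries in $\mathbb{Z}_2$ such that $c_{i,i}=1$ and $c_{i,j}=0$ for $i>j$. Label the facets of the $n$-cube $I^n$ as $F_1,\dots,F_{2n}$ with $F_j$, $F_{n+j}$ opposite. With $e_1,\dots,e_n$ the standard basis of $\mathbb{Z}_2^n$, set $\lambda(F_j)=e_j$, $\lambda(F_{n+j})=e_j+\sum_{k>j}c_{j,k}e_k$. The real Bott tower $Y(C)$ is the small cover $(\mathbb{Z}_2^n\times I^n)/\sim$, where $(t,p)\sim(t',p')$ iff $p=p'$ and $t-t'$ lies in the span of $\lambda(F)$ over facets $F\ni p$. Let $W$ be the right-angled Coxeter group with generators $s_1,\dots,s_{2n}$ and relations $s_j^2=1$ and $(s_is_j)^2=1$ for $1\le i<j\le 2n$, $j\ne i+n$; then $\pi_1(Y_n)$ is the kernel of the homomorphism $W\to\mathbb{Z}_2^n$, $s_i\mapsto\lambda(F_i)$. For $n+1\le j\le 2n$, $\alpha_j:=s_js_{j-n}s_{j-n+1}^{c_{j-n,j-n+1}}\cdots s_n^{c_{j-n,n}}$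 (so $\alpha_{2n}=s_{2n}s_n$); these lie in $\pi_1(Y_n)$. *)

(* Defs.v *)
From Stdlib Require Import Relation_Operators.
From mathcomp Require Import all_boot all_order all_algebra.
Set Implicit Arguments. Unset Strict Implicit. Unset Printing Implicit Defensive.
Import GRing.Theory.
Local Open Scope ring_scope.

(* Indices are 0-based: the paper's generator s_{i+1} (1 <= i+1 <= 2n) is the
   letter i : 'I_(n+n); the paper's facet F_{j+1} likewise. *)

Definition bott_matrix (n : nat) (C : 'M['F_2]_n) : Prop :=
  (forall i, C i i = 1) /\ (forall i j : 'I_n, (j < i)%N -> C i j = 0).

(* Elements of W are represented by words in the generators s_i (each s_i is an
   involution, so s_i^-1 = s_i and words need only positive letters);
   two words represent the same element iff they are related by the
   equivalence closure of inserting/deleting relators in context. *)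
Definition word (n : nat) := seq 'I_(n + n).

Definition relator (n : nat) (r : word n) : Prop :=
  (exists i, r = [:: i; i]) \/
  (exists i j : 'I_(n + n),
      (i < j)%N /\ (nat_of_ord j <> i + n)%N /\ r = [:: i; j; i; j]).

Inductive wstep (n : nat) : word n -> word n -> Prop :=
| wstep_rel (u v r : word n) : relator r -> wstep (u ++ r ++ v) (u ++ v).

Definition wequiv (n : nat) : word n -> word n -> Prop :=
  clos_refl_sym_trans (word n) (@wstep n).

(* group operations on words: product = concatenation, inverse = reversal *)
Definition winv (n : nat) (w : word n) : word n := rev w.

Definition wcomm (n : nat) (a b : word n) : word n :=
  winv a ++ winv b ++ a ++ b.

Definition wzpow (n : nat) (w : word n) (k : int) : word n :=
  match k with
  | Posz m => flatten (nseq m w)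
  | Negz m => flatten (nseq m.+1 (winv w))
  end.

Definition in_gen (n : nat) (S : word n -> Prop) (w : word n) : Prop :=
  exists l : seq (bool * word n),
    (forall x, x \in l -> S x.2) /\
    wequiv w (flatten [seq (if x.1 then winv x.2 else x.2) | x <- l]).

Definition unitv (n : nat) (j : 'I_n) : 'rV['F_2]_n := \row_k (if k == j then 1 else 0).

Definition lambda (n : nat) (C : 'M['F_2]_n) (i : 'I_(n + n)) : 'rV['F_2]_n :=
  match split i with
  | inl j => unitv j
  | inr j => unitv j + \sum_(k : 'I_n | (j < k)%N) C j k *: unitv k
  end.

Definition wmap (n : nat) (C : 'M['F_2]_n) (w : word n) : 'rV['F_2]_n :=
  \sum_(x <- w) lambda C x.

Definition in_pi1 (n : nat) (C : 'M['F_2]_n) (w : word n) : Prop := wmap C w = 0.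

Definition in_comm_pi1 (n : nat) (C : 'M['F_2]_n) : word n -> Prop :=
  in_gen (fun w => exists a b, in_pi1 C a /\ in_pi1 C b /\ w = wcomm a b).

(* alpha_{n+j} = s_{n+j} s_j s_{j+1}^{c_{j,j+1}} ... s_n^{c_{j,n}}  (0-based j) *)
Definition alpha (n : nat) (C : 'M['F_2]_n) (j : 'I_n) : word n :=
  [:: rshift n j; lshift n j] ++
  map (lshift n) (filter (fun k : 'I_n => (j < k)%N && (C j k == 1)) (enum 'I_n)).

Definition alpha2 (n : nat) (C : 'M['F_2]_n) (j : 'I_n) : word n :=
  alpha C j ++ alpha C j.

Definition Qset (n : nat) (C : 'M['F_2]_n) : {set 'I_n} :=
  [set j : 'I_n | [exists p : 'I_n, (p < j)%N && (C p j == 1)]].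

(* Main.v *)
Require Import Defs.
From mathcomp Require Import all_boot all_order all_algebra.
From Stdlib Require Import Relation_Operators.
From mathcomp Require Import zify.
Set Implicit Arguments. Unset Strict Implicit. Unset Printing Implicit Defensive.
Import GRing.Theory.
Local Open Scope ring_scope.

Section S.
Variable n : nat.
Implicit Types (u v w p q : word n) (x y : 'I_(n + n)).

Definition coord x : 'I_n := match split x with inl j => j | inr j => j end.
Definition isb x : bool := match split x with inl _ => false | inr _ => true end.

Lemma coord_l (j : 'I_n) : coord (lshift n j) = j.
Proof. by rewrite /coord (unsplitK (inl _ j)). Qed.
Lemma coord_r (j : 'I_n) : coord (rshift n j) = j.
Proof. by rewrite /coord (unsplitK (inr _ j)). Qed.
Lemma isb_l (j : 'I_n) : isb (lshift n j) = false.
Proof. by rewrite /isb (unsplitK (inl _ j)). Qed.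
Lemma isb_r (j : 'I_n) : isb (rshift n j) = true.
Proof. by rewrite /isb (unsplitK (inr _ j)). Qed.
Lemma letterE x : x = if isb x then rshift n (coord x) else lshift n (coord x).
Proof. by rewrite /isb /coord -{1}(splitK x); case: (split x). Qed.
Lemma valE x : nat_of_ord x = (isb x * n + coord x)%N.
Proof. rewrite /isb /coord; case: splitP => j ->; by rewrite ?mul0n ?mul1n. Qed.

Lemma weq_refl u : wequiv u u. Proof. exact: rst_refl. Qed.
Lemma weq_sym u v : wequiv u v -> wequiv v u. Proof. exact: rst_sym. Qed.
Lemma weq_trans u v w : wequiv u v -> wequiv v w -> wequiv u w. Proof. exact: rst_trans. Qed.

Lemma weq_ctx p q u v : wequiv u v -> wequiv (p ++ u ++ q) (p ++ v ++ q).
Proof.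
elim=> [a b [a' b' r Hr]| a | a b _ IH | a b c _ IH1 _ IH2].
- apply: rst_step.
  have -> : p ++ (a' ++ r ++ b') ++ q = (p ++ a') ++ r ++ (b' ++ q) by rewrite !catA.
  have -> : p ++ (a' ++ b') ++ q = (p ++ a') ++ (b' ++ q) by rewrite !catA.
  exact: wstep_rel.
- exact: rst_refl.
- exact: rst_sym.
- exact: rst_trans IH2.
Qed.

Lemma weq_cat u u' v v' : wequiv u u' -> wequiv v v' -> wequiv (u ++ v) (u' ++ v').
Proof.
move=> H1 H2; apply: (@weq_trans _ (u' ++ v)).
  by have := weq_ctx [::] v H1; rewrite /=.
by have := weq_ctx u' [::] H2; rewrite !cats0.
Qed.

Lemma weq_cons x u v : wequiv u v -> wequiv (x :: u) (x :: v).
Proof. by move=> H; apply: (weq_cat (weq_refl [:: x]) H). Qed.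

Lemma weq_cancel p q x : wequiv (p ++ [:: x; x] ++ q) (p ++ q).
Proof. apply: rst_step; apply: wstep_rel; left; by exists x. Qed.

Lemma weq_cancel0 x : wequiv [:: x; x] [::].
Proof. by have := weq_cancel [::] [::] x. Qed.

Lemma coord_neq_rel x y : coord x != coord y -> (x < y)%N ->
  relator [:: x; y; x; y].
Proof.
move=> Hc Hxy; right; exists x, y; split=> //; split=> // E.
move: Hc; rewrite (valE x) (valE y) in E * => Hc.
have hx := ltn_ord (coord x); have hy := ltn_ord (coord y).
case: (isb x) (isb y) E => [] [] /= E; try lia.
have : nat_of_ord (coord x) = coord y by lia.
by move/val_inj=> E'; rewrite E' eqxx in Hc.
Qed.

Lemma weq_swap x y : coord x != coord y -> wequiv [:: x; y] [:: y; x].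
Proof.
wlog Hxy : x y / (x < y)%N.
  move=> Hw Hc; case: (ltngtP x y) => H.
  - exact: Hw.
  - by apply: weq_sym; apply: Hw; rewrite // eq_sym.
  - by move/val_inj: H => H; rewrite H eqxx in Hc.
move=> Hc; apply: weq_sym.
have R := coord_neq_rel Hc Hxy.
apply: (@weq_trans _ ([:: y; x] ++ [:: x; y; x; y] ++ [::])).
  by apply: weq_sym; apply: rst_step; apply: wstep_rel.
apply: (@weq_trans _ ([:: y] ++ [:: y; x; y])).
  by have := weq_cancel [:: y] [:: y; x; y] x.
by have := weq_cancel [::] [:: x; y] y.
Qed.

Lemma weq_comm x u : all (fun y => coord y != coord x) u -> wequiv (x :: u) (u ++ [:: x]).
Proof.
elim: u => [|y u IH] /=; first by move=> _; apply: weq_refl.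
case/andP=> Hy Hu; apply: (@weq_trans _ (y :: x :: u)).
  have := weq_ctx [::] u (weq_swap (y:=y) (x:=x) _); apply.
  by rewrite eq_sym.
exact: weq_cons (IH Hu).
Qed.

Definition dmul (a b : bool * int) : bool * int :=
  (a.1 (+) b.1, a.2 + (if a.1 then - b.2 else b.2)).
Definition dinv (a : bool * int) : bool * int := (a.1, if a.1 then a.2 else - a.2).
Definition did : bool * int := (false, 0).
Definition gen x : bool * int := (true, Posz (isb x)).

Fixpoint evj (j : 'I_n) (w : word n) : bool * int :=
  match w with
  | [::] => did
  | x :: w' => if coord x == j then dmul (gen x) (evj j w') else evj j w'
  end.

Lemma dmulA a b c : dmul a (dmul b c) = dmul (dmul a b) c.
Proof.
case: a b c => [[] s] [[] t] [[] r]; rewrite /dmul /=; congr pair; lia.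
Qed.
Lemma dmul1 a : dmul did a = a.
Proof. by case: a => b t; rewrite /dmul /= add0r. Qed.
Lemma dmulr1 a : dmul a did = a.
Proof. case: a => [[] t]; rewrite /dmul /=; congr pair; lia. Qed.
Lemma dinvM a b : dinv (dmul a b) = dmul (dinv b) (dinv a).
Proof.
case: a b => [[] s] [[] t]; rewrite /dinv /dmul /=; congr pair; lia.
Qed.

Lemma evj_cat j u v : evj j (u ++ v) = dmul (evj j u) (evj j v).
Proof.
elim: u => [|x u IH] /=; first by rewrite dmul1.
by case: ifP => _; rewrite IH // dmulA.
Qed.

Lemma evj1 j x : evj j [:: x] = if coord x == j then gen x else did.
Proof. by rewrite /=; case: ifP => _ //; rewrite dmulr1. Qed.

Lemma evj_rev j u : evj j (rev u) = dinv (evj j u).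
Proof.
elim: u => [|x u IH] //=.
rewrite rev_cons -cats1 evj_cat evj1 IH.
case: ifP => _; last by rewrite dmulr1.
by rewrite dinvM.
Qed.

Lemma evj_rel j r : relator r -> evj j r = did.
Proof.
have sq x : evj j [:: x; x] = did.
  rewrite /=; case: (coord x == j) => //; rewrite /dmul /did /=; congr pair; lia.
case=> [[x ->]|[x [y [Hxy [Hn ->]]]]]; first exact: sq.
have Hc : coord x != coord y.
  apply/eqP=> E; apply: Hn; rewrite (valE x) (valE y) E in Hxy *.
  by case: (isb x) (isb y) Hxy => [] [] /=; lia.
rewrite /=; case: (eqVneq (coord x) j) => Ex; case: (eqVneq (coord y) j) => Ey //.
- by rewrite Ex Ey eqxx in Hc.
- rewrite /dmul /did /=; congr pair; lia.
- rewrite /dmul /did /=; congr pair; lia.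
Qed.

Lemma evj_wequiv u v : wequiv u v -> forall j, evj j u = evj j v.
Proof.
elim=> [a b [a' b' r Hr]| a | a b _ IH | a b c _ IH1 _ IH2] j.
- by rewrite !evj_cat (evj_rel j Hr) dmul1.
- by [].
- by rewrite IH.
- by rewrite IH1 IH2.
Qed.

Definition rep m u : word n := flatten (nseq m u).
Definition Tw (j : 'I_n) (t : int) : word n :=
  match t with
  | Posz m => rep m [:: rshift n j; lshift n j]
  | Negz m => rep m.+1 [:: lshift n j; rshift n j]
  end.
Definition Aw (j : 'I_n) (b : bool) : word n := if b then [:: lshift n j] else [::].
Definition blk (j : 'I_n) (e : bool * int) : word n := Tw j e.2 ++ Aw j e.1.
Definition NF (e : 'I_n -> bool * int) : word n := flatten [seq blk j (e j) | j <- enum 'I_n].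

Lemma rep_shift (a b : 'I_(n + n)) m : a :: rep m [:: b; a] = rep m [:: a; b] ++ [:: a].
Proof. elim: m => [|m IH] //=; by rewrite -IH. Qed.
Lemma repS m u : rep m.+1 u = rep m u ++ u.
Proof.
rewrite /rep; elim: m => [|m IH]; first by rewrite /= cats0.
rewrite /= in IH *; by rewrite {1}IH catA.
Qed.

Lemma A_flip (j : 'I_n) b0 : wequiv (lshift n j :: Aw j b0) (Aw j (~~ b0)).
Proof. case: b0 => /=; [exact: weq_cancel0 | exact: weq_refl]. Qed.
Lemma A_flip2 (j : 'I_n) b0 :
  wequiv (rshift n j :: Aw j b0) ([:: rshift n j; lshift n j] ++ Aw j (~~ b0)).
Proof.
case: b0 => /=; first exact: weq_refl.
apply: weq_sym; have := weq_cancel [:: rshift n j] [::] (lshift n j); by rewrite cats0.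
Qed.

Lemma blkE j b t : blk j (b, t) = Tw j t ++ Aw j b. Proof. by []. Qed.

Lemma blk_b (j : 'I_n) e :
  wequiv (rshift n j :: blk j e) (blk j (dmul (true, 1) e)).
Proof.
case: e => b0 t.
have -> : dmul (true, 1) (b0, t) = (~~ b0, 1 - t) by [].
rewrite !blkE; set a := lshift n j; set b := rshift n j.
case: t => [[|m]|m].
- rewrite subr0; exact: A_flip2.
- have -> : 1 - Posz m.+1 = - Posz m by lia.
  rewrite [Tw j (Posz m.+1)]/Tw [rep _ _]/= -/(rep m [:: b; a]).
  apply: (@weq_trans _ (a :: rep m [:: b; a] ++ Aw j b0)).
    by have := weq_cancel [::] (a :: rep m [:: b; a] ++ Aw j b0) b.
  rewrite -cat_cons rep_shift -catA.
  case: m => [|m]; first exact: A_flip.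
  apply: (weq_cat (weq_refl _)); exact: A_flip.
- have -> : 1 - Negz m = Posz m.+2 by rewrite NegzE; lia.
  rewrite /Tw -/a -/b -cat_cons.
  have -> : b :: rep m.+1 [:: a; b] = rep m.+1 [:: b; a] ++ [:: b].
    by rewrite [rep m.+1 [:: a; b]]/= -/(rep m [:: a; b]) (rep_shift b a).
  rewrite (repS m.+1) -!catA; apply: (weq_cat (weq_refl (rep m.+1 [:: b; a]))); exact: A_flip2.
Qed.

Lemma blk_a (j : 'I_n) e :
  wequiv (lshift n j :: blk j e) (blk j (dmul (true, 0) e)).
Proof.
case: e => b0 t.
have -> : dmul (true, 0) (b0, t) = (~~ b0, 0 - t) by [].
rewrite !blkE; set a := lshift n j; set b := rshift n j.
case: t => [[|m]|m].
- rewrite [Tw j 0]/= /=. exact: A_flip.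
- have -> : 0 - Posz m.+1 = Negz m by rewrite NegzE; lia.
  rewrite /Tw -/a -/b [rep m.+1 [:: b; a]]/= -/(rep m [:: b; a]).
  rewrite -cat_cons rep_shift -catA [rep m.+1 _]/= -/(rep m [:: a; b]).
  do 2 apply: weq_cons; apply: (weq_cat (weq_refl _)); exact: A_flip.
- have -> : 0 - Negz m = Posz m.+1 by rewrite NegzE; lia.
  rewrite /Tw -/a -/b [rep m.+1 [:: a; b]]/= -/(rep m [:: a; b]).
  apply: (@weq_trans _ (b :: rep m [:: a; b] ++ Aw j b0)).
    by have := weq_cancel [::] (b :: rep m [:: a; b] ++ Aw j b0) a.
  rewrite -cat_cons (rep_shift b a) repS -!catA.
  apply: (weq_cat (weq_refl _)); exact: A_flip2.
Qed.

Lemma blk_letter (j : 'I_n) x e : coord x = j ->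
  wequiv (x :: blk j e) (blk j (dmul (gen x) e)).
Proof.
move=> Hc.
have -> : x :: blk j e = (if isb x then rshift n j else lshift n j) :: blk j e.
  by rewrite -Hc -letterE.
rewrite /gen; case: (isb x); [exact: blk_b | exact: blk_a].
Qed.

Lemma all_rep (P : pred 'I_(n + n)) m u : all P u -> all P (rep m u).
Proof. move=> H; elim: m => [|m IH] //=; by rewrite all_cat H. Qed.

Lemma blk_all (j : 'I_n) e : all (fun y => coord y == j) (blk j e).
Proof.
case: e => b t; rewrite blkE all_cat; apply/andP; split.
  case: t => m; apply: all_rep; by rewrite /= coord_l coord_r eqxx.
by case: b; rewrite /= ?coord_l ?eqxx.
Qed.

Lemma flat_all (c : 'I_n) (P : seq 'I_n) (f : 'I_n -> bool * int) :
  c \notin P -> all (fun y => coord y != c) (flatten [seq blk j (f j) | j <- P]).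
Proof.
elim: P => [|j P IH] //=; rewrite inE negb_or => /andP [Hj HP].
rewrite all_cat IH // andbT.
apply: sub_all (blk_all j (f j)) => y /eqP ->; by rewrite eq_sym.
Qed.

Lemma letter_NF x e :
  wequiv (x :: NF e) (NF (fun j => if coord x == j then dmul (gen x) (e j) else e j)).
Proof.
set c := coord x.
have [P [S [HE [HP HS]]]] : exists P S, enum 'I_n = P ++ c :: S /\ c \notin P /\ c \notin S.
  have Hc : c \in enum 'I_n by rewrite mem_enum.
  have Hu := enum_uniq 'I_n.
  move: Hu; case/splitPr: Hc => P S Hu; exists P, S; split=> //.
  move: Hu; rewrite cat_uniq /= => /and3P [_ H1 /andP [H2 _]].
  split; last by [].
  by move: H1; rewrite negb_or => /andP [].
rewrite /NF HE !map_cat !flatten_cat /= eqxx.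
have EP : [seq blk j (if c == j then dmul (gen x) (e j) else e j) | j <- P] = [seq blk j (e j) | j <- P].
  apply/eq_in_map => j Hj; case: eqP => // E; by rewrite E Hj in HP.
have ES : [seq blk j (if c == j then dmul (gen x) (e j) else e j) | j <- S] = [seq blk j (e j) | j <- S].
  apply/eq_in_map => j Hj; case: eqP => // E; by rewrite E Hj in HS.
rewrite EP ES.
set FP := flatten [seq blk j (e j) | j <- P].
apply: (@weq_trans _ ((FP ++ [:: x]) ++ (blk c (e c) ++ flatten [seq blk j (e j) | j <- S]))).
  rewrite -cat_cons; apply: weq_cat; last exact: weq_refl.
  exact: weq_comm (flat_all e HP).
rewrite -catA; apply: (weq_cat (weq_refl FP)).
rewrite catA; apply: weq_cat; last exact: weq_refl.
exact: blk_letter.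
Qed.

Lemma weq_NF w : wequiv w (NF (fun j => evj j w)).
Proof.
elim: w => [|x w IH].
  rewrite /NF /=; elim: (enum 'I_n) => [|j s IHs] //=; exact: weq_refl.
apply: weq_trans (weq_cons x IH) _.
exact: letter_NF.
Qed.

Lemma faithful u v : (forall j, evj j u = evj j v) -> wequiv u v.
Proof.
move=> H; apply: weq_trans (weq_NF u) _; apply: weq_sym.
have -> : NF (fun j => evj j u) = NF (fun j => evj j v).
  by rewrite /NF; congr flatten; apply: eq_map => j; rewrite H.
exact: weq_NF.
Qed.

Lemma F2_cases (z : 'F_2) : z = 0 \/ z = 1.
Proof. case: z => [[|[|m]] Hm]; [left|right|]; try exact: val_inj. by []. Qed.
Lemma F2_add (z : 'F_2) : z + z = 0.
Proof. by case: (F2_cases z) => ->; [rewrite addr0 | apply: val_inj]. Qed.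
Lemma F2_addb (b1 b2 : bool) : ((b1 (+) b2)%:R : 'F_2) = b1%:R + b2%:R.
Proof. case: b1; case: b2 => /=; rewrite ?addr0 ?add0r //. by rewrite F2_add. Qed.

Variable C : 'M['F_2]_n.

Lemma notQ (k j : 'I_n) : k \notin Qset C -> (j < k)%N -> C j k = 0.
Proof.
rewrite /Qset inE negb_exists => /forallP /(_ j) => H Hj.
rewrite Hj /= in H; by case: (F2_cases (C j k)) => // E; rewrite E eqxx in H.
Qed.

Lemma wmap_cons x w : wmap C (x :: w) = lambda C x + wmap C w.
Proof. by rewrite /wmap big_cons. Qed.

Lemma unitvE (j k : 'I_n) : unitv j 0 k = (k == j)%:R.
Proof. by rewrite /unitv mxE; case: (k == j). Qed.

Lemma lambda_notQ x k : k \notin Qset C -> lambda C x 0 k = (coord x == k)%:R.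
Proof.
move=> Hk; rewrite /lambda /coord; case: (split x) => j.
  by rewrite unitvE eq_sym.
rewrite mxE unitvE summxE big1 ?addr0 ?(eq_sym k) // => i Hi.
rewrite mxE unitvE; set b := (_ == _); case Eb: b; last by rewrite mulr0. move/eqP: Eb => E; subst i; by rewrite notQ // mul0r.
Qed.

Lemma wmap_notQ w k : k \notin Qset C -> wmap C w 0 k = ((evj k w).1)%:R.
Proof.
move=> Hk; elim: w => [|x w IH]; first by rewrite /wmap big_nil mxE.
rewrite wmap_cons mxE IH lambda_notQ //=.
case: eqP => _ /=; last by rewrite add0r.
by case: (evj k w).1; rewrite /= ?addr0 ?F2_add.
Qed.

Lemma pi1_notQ a k : in_pi1 C a -> k \notin Qset C -> (evj k a).1 = false.
Proof.
move=> Ha Hk; have := wmap_notQ a Hk; rewrite Ha mxE.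
by case: (evj k a).1.
Qed.

Lemma evj_lmap k (l : seq 'I_n) : evj k (map (lshift n) l) = (odd (count_mem k l), 0).
Proof.
elim: l => [|j l IH] //=; rewrite coord_l IH /gen isb_l.
set b := (j == k); case Eb: b => /=; last by [].
by rewrite /dmul /=; congr pair; lia.
Qed.

Definition Pq (q k : 'I_n) := (q < k)%N && (C q k == 1).

Lemma evj_alpha (k q : 'I_n) : evj k (alpha C q) = if k == q then (false, 1) else (Pq q k, 0).
Proof.
rewrite /alpha evj_cat evj_lmap count_uniq_mem ?filter_uniq ?enum_uniq //.
rewrite mem_filter mem_enum andbT /= coord_l coord_r /gen isb_l isb_r.
rewrite (eq_sym q k); case: eqP => [->|_] /=.
  by rewrite /Pq ltnn /dmul /=; congr pair; lia.
  by rewrite dmul1 oddb.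
by rewrite -enumT enum_uniq.
Qed.

Lemma pi1_alpha (q : 'I_n) : in_pi1 C (alpha C q).
Proof.
rewrite /in_pi1 /wmap /alpha big_cat /= !big_cons big_nil addr0 big_map.
rewrite /lambda (unsplitK (inl _ q)) (unsplitK (inr _ q)).
rewrite big_filter.
have -> : \sum_(k : 'I_n | (q < k)%N) C q k *: unitv k =
          \sum_(i <- enum 'I_n | (q < i)%N && (C q i == 1)) unitv i.
  rewrite big_enum_cond /= [LHS]big_mkcond [RHS]big_mkcond; apply: eq_bigr => i _.
  case: ((q < i)%N) => //=.
  by case: (F2_cases (C q i)) => ->; rewrite ?scale0r ?scale1r.
rewrite (eq_bigr (fun i => unitv i)); last by move=> i _; rewrite (unsplitK (inl _ i)).
have rowF2 (v : 'rV['F_2]_n) : v + v = 0 by apply/rowP => k; rewrite !mxE F2_add.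
set u := unitv q; set S := \sum_(i <- _ | _) _.
by rewrite -(addrA u S u) (addrC S u) addrA rowF2 add0r rowF2.
Qed.

Definition dcomm (A B : bool * int) := dmul (dinv A) (dmul (dinv B) (dmul A B)).

Lemma dcommE b1 t1 b2 t2 : dcomm (b1, t1) (b2, t2) =
  (false, if b1 then (if b2 then 2 * t1 - 2 * t2 else 2 * t2) else (if b2 then - (2 * t1) else 0)).
Proof. case: b1; case: b2; rewrite /dcomm /dmul /dinv /=; congr pair; lia. Qed.

Lemma evj_wcomm k a b : evj k (wcomm a b) = dcomm (evj k a) (evj k b).
Proof. by rewrite /wcomm !evj_cat /winv !evj_rev. Qed.

Definition goodp (k : 'I_n) (P : bool * int) :=
  [&& P.1 == false, (2 %| P.2)%Z & (k \in Qset C) || (P.2 == 0)].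

Lemma good_did k : goodp k did.
Proof. by rewrite /goodp /= eqxx orbT. Qed.

Lemma good_mul k A B : goodp k A -> goodp k B -> goodp k (dmul A B).
Proof.
case: A B => [b1 t1] [b2 t2]; rewrite /goodp /dmul /=.
case/and3P => /eqP -> H1 H1'; case/and3P => /eqP -> H2 H2' /=.
rewrite rpredD //; case: (k \in Qset C) H1' H2' => //= /eqP -> /eqP ->.
by rewrite addr0.
Qed.

Lemma good_inv k A : goodp k A -> goodp k (dinv A).
Proof.
case: A => [b1 t1]; rewrite /goodp /dinv /=.
case/and3P => /eqP -> H1 H1' /=; rewrite rpredN H1 /=.
by case: (k \in Qset C) H1' => //= /eqP ->.
Qed.

Lemma good_comm k A B : (k \notin Qset C -> A.1 = false /\ B.1 = false) ->
  goodp k (dcomm A B).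
Proof.
case: A B => [b1 t1] [b2 t2] /= H; rewrite dcommE /goodp /=.
apply/andP; split.
  apply/dvdzP; case: b1 {H}; case: b2.
  - by exists (t1 - t2); lia.
  - by exists t2; lia.
  - by exists (- t1); lia.
  - by exists 0.
case: (boolP (k \in Qset C)) => //= Hk.
by case: (H Hk) => -> ->.
Qed.

Lemma good_flat k (l : seq (bool * word n)) :
  (forall z, z \in l -> goodp k (evj k z.2)) ->
  goodp k (evj k (flatten [seq (if z.1 then winv z.2 else z.2) | z <- l])).
Proof.
elim: l => [|z l IH] H /=; first exact: good_did.
rewrite evj_cat; apply: good_mul; last by apply: IH => y Hy; apply: H; rewrite inE Hy orbT.
have := H z (mem_head _ _); case: z.1 => //; rewrite /winv evj_rev; exact: good_inv.
Qed.

Lemma good_gen (S : word n -> Prop) w :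
  (forall s, S s -> forall k, goodp k (evj k s)) -> in_gen S w -> forall k, goodp k (evj k w).
Proof.
move=> HS [l [Hl Hw]] k; rewrite (evj_wequiv Hw).
apply: good_flat => z Hz; exact: HS (Hl z Hz) k.
Qed.

Lemma good_comm_pi1 w : in_comm_pi1 C w -> forall k, goodp k (evj k w).
Proof.
apply: good_gen => s [a [b [Ha [Hb ->]]]] k.
rewrite evj_wcomm; apply: good_comm => Hk; split; exact: pi1_notQ.
Qed.

Lemma evj_alpha2 (k q : 'I_n) : evj k (alpha2 C q) = (false, if k == q then 2 else 0).
Proof.
rewrite /alpha2 evj_cat evj_alpha; case: (k == q); rewrite /dmul /=; congr pair; try lia.
by case: (Pq q k).
Qed.

Lemma evj_wzpow k u t z : evj k u = (false, t) -> evj k (wzpow u z) = (false, z * t).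
Proof.
move=> H; case: z => m /=.
  elim: m => [|m IH] /=; first by rewrite mul0r.
  by rewrite evj_cat IH H /dmul /=; congr pair; lia.
have Hi : evj k (winv u) = (false, - t) by rewrite /winv evj_rev H.
elim: m => [|m IH].
  by rewrite /= cats0 Hi NegzE; congr pair; lia.
rewrite [nseq _ _]/= [flatten _]/= evj_cat IH Hi /dmul /= !NegzE; congr pair; lia.
Qed.

Lemma evj_flat_pow (s : seq 'I_n) (f : 'I_n -> int) k : uniq s ->
  evj k (flatten [seq wzpow (alpha2 C q) (f q) | q : 'I_n <- s]) = (false, if k \in s then f k * 2 else 0).
Proof.
elim: s => [|q s IH] //= /andP [Hq Hs].
rewrite evj_cat IH // (evj_wzpow _ (evj_alpha2 k q)) inE.
case: (eqVneq k q) => [E|NE] /=.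
  subst k; rewrite (negbTE Hq) /dmul /=; congr pair; lia.
by rewrite /dmul /=; congr pair; case: (k \in s); lia.
Qed.

Definition flag (z : bool * word n) : word n := if z.1 then winv z.2 else z.2.

Lemma in_gen_equiv (S : word n -> Prop) w w' : wequiv w w' -> in_gen S w' -> in_gen S w.
Proof. move=> H [l [Hl Hw]]; exists l; split=> //; exact: weq_trans H Hw. Qed.

Lemma in_gen_nil (S : word n -> Prop) : in_gen S [::].
Proof. exists [::]; split=> //; exact: weq_refl. Qed.

Lemma in_gen_cat (S : word n -> Prop) u v : in_gen S u -> in_gen S v -> in_gen S (u ++ v).
Proof.
move=> [l1 [H1 E1]] [l2 [H2 E2]]; exists (l1 ++ l2); split.
  by move=> z; rewrite mem_cat => /orP [] ?; [apply: H1 | apply: H2].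
rewrite map_cat flatten_cat; exact: weq_cat.
Qed.

Lemma in_gen_pow (S : word n -> Prop) u z : S u -> in_gen S (wzpow u z).
Proof.
move=> Hu; case: z => m.
  exists (nseq m (false, u)); split; first by move=> z /nseqP [-> _].
  by rewrite map_nseq; exact: weq_refl.
exists (nseq m.+1 (true, u)); split; first by move=> z /nseqP [-> _].
by rewrite map_nseq; exact: weq_refl.
Qed.

Lemma in_gen_mono (S S' : word n -> Prop) w :
  (forall s, S s -> (exists2 c, S' c & wequiv s c) /\ (exists2 c, S' c & wequiv (winv s) c)) ->
  in_gen S w -> in_gen S' w.
Proof.
move=> HS [l [Hl Hw]].
suff [l' [Hl' E]] : exists l', (forall z, z \in l' -> S' z.2) /\
    wequiv (flatten [seq (if z.1 then winv z.2 else z.2) | z <- l])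
           (flatten [seq (if z.1 then winv z.2 else z.2) | z <- l']).
  exists l'; split=> //; exact: weq_trans Hw E.
elim: l Hl {Hw} => [|z l IH] Hl; first by exists [::]; split=> //; exact: weq_refl.
have [|l' [Hl' E]] := IH; first by move=> y Hy; apply: Hl; rewrite inE Hy orbT.
have [[c1 Hc1 E1] [c2 Hc2 E2]] := HS _ (Hl z (mem_head _ _)).
exists ((false, if z.1 then c2 else c1) :: l'); split.
  by move=> y; rewrite inE => /orP [/eqP -> /=|]; [case: z.1 | apply: Hl'].
rewrite /=; apply: weq_cat => //; by case: z.1.
Qed.

Lemma alpha2_comm (q : 'I_n) : q \in Qset C -> exists p : 'I_n,
  wequiv (alpha2 C q) (wcomm (alpha C p) (alpha C q)) /\
  wequiv (winv (alpha2 C q)) (wcomm (alpha C q) (alpha C p)).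
Proof.
rewrite inE => /existsP [p /andP [Hpq /eqP Hc]]; exists p.
have Ppq : Pq p q by rewrite /Pq Hpq Hc eqxx.
have Pqp : Pq q p = false by rewrite /Pq ltnNge ltnW.
have Hnpq : q != p by rewrite neq_ltn Hpq orbT.
split; apply: faithful => k; rewrite ?evj_wcomm /winv ?evj_rev evj_alpha2 !evj_alpha.
- case: (eqVneq k q) => [E|Nq].
    subst k; rewrite (negbTE Hnpq) Ppq dcommE; congr pair; lia.
  case: (eqVneq k p) => [E|Np].
    subst k; rewrite Pqp dcommE; congr pair; lia.
  by rewrite dcommE; case: (Pq p k); case: (Pq q k); congr pair; lia.
- rewrite /dinv /=.
  case: (eqVneq k q) => [E|Nq].
    subst k; rewrite (negbTE Hnpq) Ppq dcommE; congr pair; lia.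
  case: (eqVneq k p) => [E|Np].
    subst k; rewrite Pqp dcommE; congr pair; lia.
  by rewrite dcommE; case: (Pq p k); case: (Pq q k); congr pair; lia.
Qed.

End S.

Local Close Scope ring_scope.

Theorem corollary2p8 (n : nat) (C : 'M['F_2]_n) :
  (1 <= n)%N -> bott_matrix C ->
  (forall w : word n,
     in_comm_pi1 C w <-> in_gen (fun x => exists2 q, q \in Qset C & x = alpha2 C q) w) /\
  (forall x y : word n, in_comm_pi1 C x -> in_comm_pi1 C y -> wequiv (x ++ y) (y ++ x)) /\
  (forall k : 'I_n -> int,
     wequiv (flatten [seq wzpow (alpha2 C q) (k q) | q <- enum (Qset C)]) [::] ->
     forall q, q \in Qset C -> k q = 0).
Proof.
move=> _ _; split; [|split].
- move=> w; split.
  + move=> Hw; have G := good_comm_pi1 Hw.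
    pose m := fun q : 'I_n => ((evj q w).2 %/ 2)%Z.
    apply: (in_gen_equiv (w' := flatten [seq wzpow (alpha2 C q) (m q) | q <- enum (Qset C)])).
      apply: faithful => k; rewrite evj_flat_pow ?enum_uniq // mem_enum.
      have := G k; rewrite /goodp; case/and3P => /eqP H1 H2 H3.
      case: (boolP (k \in Qset C)) H3 => Hk /= H3.
        by rewrite /m divzK //; case: (evj k w) H1 => ? ? /= ->.
      by move/eqP: H3; case: (evj k w) H1 => ? ? /= -> ->.
    have : forall q, q \in enum (Qset C) -> q \in Qset C by move=> q; rewrite mem_enum.
    elim: (enum (Qset C)) => [|q s IH] Hs /=.
      exact: in_gen_nil.
    apply: in_gen_cat; last by apply: IH => r Hr; apply: Hs; rewrite inE Hr orbT.
    apply: in_gen_pow; exists q => //.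
    exact: Hs q (mem_head _ _).
  + apply: in_gen_mono => s [q Hq ->].
    have [p [E1 E2]] := alpha2_comm Hq.
    split; [exists (wcomm (alpha C p) (alpha C q)) | exists (wcomm (alpha C q) (alpha C p))] => //;
      by do 2 eexists; split; [apply: pi1_alpha | split; [apply: pi1_alpha | reflexivity]].
- move=> x y Hx Hy; apply: faithful => k; rewrite !evj_cat.
  have := good_comm_pi1 Hx k; have := good_comm_pi1 Hy k.
  case: (evj k x) => b1 t1; case: (evj k y) => b2 t2; rewrite /goodp /=.
  case/and3P => /eqP -> _ _; case/and3P => /eqP -> _ _.
  by rewrite /dmul /= addrC.
- move=> k Hk q Hq.
  have := evj_wequiv Hk q; rewrite evj_flat_pow ?enum_uniq // mem_enum Hq /=.
  case=> E; lia.
Qed.
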